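(* Let $\mathrm{FOV}_{\min}\in(0,\pi/2]$, $L_{\max}>0$, $A_{\max}>0$, and consider maximising $R(B,\mathrm{FOV})$ over $\{(B,\mathrm{FOV}): B>0,\ \mathrm{FOV}\in(0,\pi/2],\ \mathrm{FOV}\ge f_{\mathrm{FOV}}(B)\}$. Then for every $B>0$ with $f_{\mathrm{FOV}}(B)\le\pi/2$, the maximum of $R(B,\cdot)$ over $[f_{\mathrm{FOV}}(B),\pi/2]$ is attained uniquely at $\mathrm{FOV}=f_{\mathrm{FOV}}(B)$; consequently every maximiser $(B^*,\mathrm{FOV}^* )$ of the problem (if one exists) lies on the boundary of the feasible region, i.e. $\mathrm{FOV}^*=f_{\mathrm{FOV}}(B^* )$.
   Context: Fix constants: an integer $N_{\mathrm{tier}}\ge1$; an integer $N_{\mathrm{PD}}\ge 1$; $\mathrm{FF}\in(0,1]$; $K_{\mathrm{PD}}>0$; $n_{\mathrm{CPC}}\ge 1$; $P_{\mathrm t}>0$; $w>0$; $R_{\mathrm{PD}}>0$; $\Gamma>0$; $N_0>0$. The design variables are $B>0$ and $\mathrm{FOV}\in(0,\pi/2]$. Write $\theta=\theta_{\mathrm{CPC}}=\mathrm{FOV}/(2N_{\mathrm{tier}}+1)$. Define $D_2(B)=\frac{1}{K_{\mathrm{PD}}B}\sqrt{N_{\mathrm{PD}}/\mathrm{FF}}$, $D_1(B,\mathrm{FOV})=D_2(B)\,\frac{n_{\mathrm{CPC}}}{\sin\theta}$, $P_{\mathrm r}(B,\mathrm{FOV})=\mathrm{FF}\,P_{\mathrm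 t}\Big(1-\exp\Big(-\frac{D_1(B,\mathrm{FOV})^2}{2w^2}\Big)\Big)$, and the achievable rate $R(B,\mathrm{FOV})=B\log_2\Big(1+\frac{(R_{\mathrm{PD}}P_{\mathrm r}(B,\mathrm{FOV}))^2}{\Gamma N_0 B}\Big)$. Set $K_1=\frac{1}{2K_{\mathrm{PD}}}\sqrt{N_{\mathrm{PD}}/\mathrm{FF}}$ and $K_2=\frac{\pi N_{\mathrm{PD}}n_{\mathrm{CPC}}^2}{4\,\mathrm{FF}\,K_{\mathrm{PD}}^2}$. Given $L_{\max},A_{\max}>0$, define for $\mathrm{FOV}\in(0,\pi/2]$ the boundary functions $f_{\mathrm L}(\mathrm{FOV})=\frac{K_1}{L_{\max}}\cdot\frac{n_{\mathrm{CPC}}+\sin\theta}{\sin\theta\tan\theta}$ and $f_{\mathrm A}(\mathrm{FOV})=\frac{1}{\sin\theta}\sqrt{\frac{K_2}{A_{\max}}\Big(1+\sum_{i=1}^{N_{\mathrm{tier}}}6i\cos(2i\theta)\Big)}$, their (generalised) inverses $f_{\mathrm L}^{-1}(B)=\inf\{\mathrm{FOV}\in(0,\pi/2]: f_{\mathrm L}(\mathrm{FOV})\le B\}$ and $f_{\mathrm A}^{-1}(B)=\inf\{\mathrm{FOV}\in(0,\pi/2]: f_{\mathrm A}(\mathrm{FOV})\le B\}$ (with $\inf\emptyset=+\infty$), and $f_{\mathrm{FOV}}(B)=\max\{\mathrm{FOV}_{\min},\,f_{\mathrm L}^{-1}(B),\,f_{\mathrm A}^{-1}(B)\}$. *)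

(* Defs.v *)
From Stdlib Require Import Reals.
From Coquelicot Require Import Coquelicot.
Open Scope R_scope.

Record sys := Sys {
  Ntier : nat; NPD : nat; FF : R; KPD : R; nCPC : R;
  Pt : R; w : R; RPD : R; Gamma : R; N0 : R }.

Definition valid_sys (s : sys) : Prop :=
  (1 <= Ntier s)%nat /\ (1 <= NPD s)%nat /\ 0 < FF s <= 1 /\ 0 < KPD s /\
  1 <= nCPC s /\ 0 < Pt s /\ 0 < w s /\ 0 < RPD s /\ 0 < Gamma s /\ 0 < N0 s.

Definition theta (s : sys) (FOV : R) : R := FOV / (2 * INR (Ntier s) + 1).

Definition D2 (s : sys) (B : R) : R :=
  / (KPD s * B) * sqrt (INR (NPD s) / FF s).

Definition D1 (s : sys) (B FOV : R) : R :=
  D2 s B * (nCPC s / sin (theta s FOV)).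

Definition Pr (s : sys) (B FOV : R) : R :=
  FF s * Pt s * (1 - exp (- (D1 s B FOV ^ 2 / (2 * w s ^ 2)))).

Definition rate (s : sys) (B FOV : R) : R :=
  B * (ln (1 + (RPD s * Pr s B FOV) ^ 2 / (Gamma s * N0 s * B)) / ln 2).

Definition K1 (s : sys) : R := / (2 * KPD s) * sqrt (INR (NPD s) / FF s).
Definition K2 (s : sys) : R :=
  PI * INR (NPD s) * nCPC s ^ 2 / (4 * FF s * KPD s ^ 2).

Definition fL (s : sys) (Lmax FOV : R) : R :=
  K1 s / Lmax * ((nCPC s + sin (theta s FOV)) /
                 (sin (theta s FOV) * tan (theta s FOV))).

(* sum_{i=1}^{Ntier} 6 i cos(2 i theta) *)
Definition tier_sum (s : sys) (FOV : R) : R :=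
  sum_f_R0 (fun j => 6 * INR (S j) * cos (2 * INR (S j) * theta s FOV))
           (Ntier s - 1).

Definition fA (s : sys) (Amax FOV : R) : R :=
  / sin (theta s FOV) * sqrt (K2 s / Amax * (1 + tier_sum s FOV)).

(* generalised inverse: inf { FOV in (0, pi/2] | f FOV <= B }, +oo if empty *)
Definition ginv (f : R -> R) (B : R) : Rbar :=
  Glb_Rbar (fun FOV => 0 < FOV <= PI / 2 /\ f FOV <= B).

Definition Rbar_max2 (x y : Rbar) : Rbar :=
  if Rbar_le_dec x y then y else x.

Definition fFOV (s : sys) (FOVmin Lmax Amax B : R) : Rbar :=
  Rbar_max2 (Finite FOVmin)
    (Rbar_max2 (ginv (fL s Lmax) B) (ginv (fA s Amax) B)).

Definition feasible (s : sys) (FOVmin Lmax Amax B FOV : R) : Prop :=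
  0 < B /\ 0 < FOV <= PI / 2 /\ Rbar_le (fFOV s FOVmin Lmax Amax B) (Finite FOV).

(* Main.v *)
From Stdlib Require Import Lia.
Require Import Defs.
From Stdlib Require Import Reals Lra.
From Coquelicot Require Import Coquelicot.
Open Scope R_scope.

Lemma rate_decr (s : sys) (B a b : R) :
  valid_sys s -> 0 < B -> 0 < a -> a < b -> b <= PI / 2 ->
  rate s B b < rate s B a.
Proof.
  intros [HN [HNP [HFF [HK [Hn [HPt [Hw [HR [HG HN0]]]]]]]]] HB Ha Hab Hb.
  assert (Hden : 1 <= 2 * INR (Ntier s) + 1).
  { pose proof (pos_INR (Ntier s)). lra. }
  assert (Hta : 0 < theta s a) by (unfold theta; apply Rdiv_lt_0_compat; lra).
  assert (Htab : theta s a < theta s b).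
  { unfold theta, Rdiv. apply Rmult_lt_compat_r; [apply Rinv_0_lt_compat; lra | lra]. }
  assert (Htb : theta s b <= PI / 2).
  { unfold theta. apply Rle_trans with b; [|lra].
    apply Rmult_le_reg_r with (2 * INR (Ntier s) + 1); [lra|].
    unfold Rdiv. rewrite Rmult_assoc, Rinv_l by lra. nra. }
  assert (HPI := PI_RGT_0).
  assert (Hsa : 0 < sin (theta s a)) by (apply sin_gt_0; lra).
  assert (Hsab : sin (theta s a) < sin (theta s b)) by (apply sin_increasing_1; lra).
  assert (HD2 : 0 < D2 s B).
  { unfold D2. apply Rmult_lt_0_compat.
    - apply Rinv_0_lt_compat; nra.
    - apply sqrt_lt_R0. apply Rdiv_lt_0_compat; [|lra].
      apply lt_0_INR; lia. }
  assert (HDb : 0 < D1 s B b).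
  { unfold D1. apply Rmult_lt_0_compat; [lra|]. apply Rdiv_lt_0_compat; lra. }
  assert (HDab : D1 s B b < D1 s B a).
  { unfold D1. apply Rmult_lt_compat_l; [lra|]. unfold Rdiv.
    apply Rmult_lt_compat_l; [lra|]. apply Rinv_lt_contravar; nra. }
  set (xa := D1 s B a ^ 2 / (2 * w s ^ 2)).
  set (xb := D1 s B b ^ 2 / (2 * w s ^ 2)).
  assert (Hw2 : 0 < 2 * w s ^ 2) by nra.
  assert (Hxb : 0 < xb) by (unfold xb; apply Rdiv_lt_0_compat; nra).
  assert (Hxab : xb < xa).
  { unfold xa, xb, Rdiv. apply Rmult_lt_compat_r; [apply Rinv_0_lt_compat; lra|nra]. }
  assert (He1 : exp (- xa) < exp (- xb)) by (apply exp_increasing; lra).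
  assert (He2 : exp (- xb) < 1) by (rewrite <- exp_0; apply exp_increasing; lra).
  assert (HPb : 0 < Pr s B b).
  { unfold Pr. fold xb. apply Rmult_lt_0_compat; [nra|lra]. }
  assert (HPab : Pr s B b < Pr s B a).
  { unfold Pr. fold xa xb. apply Rmult_lt_compat_l; [nra|lra]. }
  assert (HGB : 0 < Gamma s * Defs.N0 s * B) by (apply Rmult_lt_0_compat; nra).
  set (ya := (RPD s * Pr s B a) ^ 2 / (Gamma s * Defs.N0 s * B)).
  set (yb := (RPD s * Pr s B b) ^ 2 / (Gamma s * Defs.N0 s * B)).
  assert (Hyb : 0 < yb).
  { unfold yb. apply Rdiv_lt_0_compat; [|lra]. apply pow_lt; nra. }
  assert (Hyab : yb < ya).
  { unfold ya, yb, Rdiv. apply Rmult_lt_compat_r; [apply Rinv_0_lt_compat; lra|].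
    assert (0 < RPD s * Pr s B b) by nra.
    assert (RPD s * Pr s B b < RPD s * Pr s B a) by nra. nra. }
  assert (Hln : ln (1 + yb) < ln (1 + ya)) by (apply ln_increasing; lra).
  assert (Hl2 : 0 < ln 2) by (rewrite <- ln_1; apply ln_increasing; lra).
  unfold rate. fold ya yb. apply Rmult_lt_compat_l; [lra|].
  unfold Rdiv. apply Rmult_lt_compat_r; [apply Rinv_0_lt_compat; lra|lra].
Qed.

Lemma max2_ge (x y : Rbar) : Rbar_le x (Rbar_max2 x y).
Proof.
  unfold Rbar_max2. destruct (Rbar_le_dec x y); auto. apply Rbar_le_refl.
Qed.

Lemma fFOV_fin (s : sys) FOVmin Lmax Amax B U :
  Rbar_le (fFOV s FOVmin Lmax Amax B) (Finite U) ->
  Finite (real (fFOV s FOVmin Lmax Amax B)) = fFOV s FOVmin Lmax Amax B /\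
  FOVmin <= real (fFOV s FOVmin Lmax Amax B) <= U.
Proof.
  intros H. pose proof (max2_ge (Finite FOVmin)
    (Rbar_max2 (ginv (fL s Lmax) B) (ginv (fA s Amax) B))) as H1.
  fold (fFOV s FOVmin Lmax Amax B) in H1.
  destruct (fFOV s FOVmin Lmax Amax B); simpl in *; try contradiction.
  auto.
Qed.

Theorem lemma2 (s : sys) (FOVmin Lmax Amax : R) :
  valid_sys s ->
  0 < FOVmin <= PI / 2 -> 0 < Lmax -> 0 < Amax ->
  (forall B : R, 0 < B ->
     Rbar_le (fFOV s FOVmin Lmax Amax B) (Finite (PI / 2)) ->
     let F := real (fFOV s FOVmin Lmax Amax B) in
     Finite F = fFOV s FOVmin Lmax Amax B /\
     (forall FOV : R, F <= FOV <= PI / 2 -> FOV <> F ->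
        rate s B FOV < rate s B F)) /\
  (forall Bs FOVs : R,
     feasible s FOVmin Lmax Amax Bs FOVs ->
     (forall B FOV : R, feasible s FOVmin Lmax Amax B FOV ->
        rate s B FOV <= rate s Bs FOVs) ->
     Finite FOVs = fFOV s FOVmin Lmax Amax Bs).
Proof.
  intros Hs Hmin HL HA. split.
  - intros B HB Hle F. destruct (fFOV_fin s FOVmin Lmax Amax B _ Hle) as [E Hr].
    split; [exact E|]. intros FOV HF Hne. fold F in Hr.
    apply rate_decr; auto; lra.
  - intros Bs FOVs [HB [HF Hle]] Hmax.
    destruct (fFOV_fin s FOVmin Lmax Amax Bs _ Hle) as [E Hr].
    set (F := real (fFOV s FOVmin Lmax Amax Bs)) in *.
    destruct (Req_dec FOVs F) as [Heq|Hne].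
    + rewrite Heq; exact E.
    + exfalso.
      assert (Hfe : feasible s FOVmin Lmax Amax Bs F).
      { split; [exact HB|]. split; [lra|]. rewrite <- E. apply Rbar_le_refl. }
      pose proof (Hmax _ _ Hfe).
      pose proof (rate_decr s Bs F FOVs Hs HB ltac:(lra) ltac:(lra) ltac:(lra)).
      lra.
Qed.
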